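(* Consider the quantized estimation system described in the context, with parameter set $\Theta\subset\mathbb{R}^{D_\theta}$. Assume (i) the interior of $\Theta$ in $\mathbb{R}^{D_\theta}$ is nonempty, and (ii) for every $j\in\{1,\dots,N\}$ and every $\mathbf{s}\in\mathcal{S}_j$, the function $\theta\mapsto q_j^{(\mathbf{s})}(\theta)$ is twice differentiable with respect to $\theta$ for all $\theta\in\Theta$. Then for any $\theta\in\Theta$, any quantization regions $\{I_{jl}^{(r)}\}$ and any statistical models $\{(\mathscr{X}_j,\mathscr{F}_j,\mathscr{P}_j^{\theta})\}$, if $$D_\theta>\lambda(N,\{R_{jl}\}):=\sum_{j=1}^N\prod_{l=1}^{L_j}R_{jl}-N,$$ then the Fisher information matrix $\mathbf{J}(\theta)$ is singular.
   Context: Setting: $\Theta\subset\mathbb{R}^{D_\theta}$ is a parameter set. There are $N\ge 1$ sensors. Sensor $j$ observes a random vector $\mathbf{x}_j$ with statistical model $(\mathscr{X}_j,\mathscr{F}_j,\mathscr{P}_j^{\theta})$, i.e. its law is the probability measure $\mathscr{P}_j^\theta$ on the measurable space $(\mathscr{X}_j,\mathscr{F}_j)$, indexed by $\theta\in\Theta$; $\mathbf{x}_1,\dots,\mathbf{x}_N$ are independent. Each $\mathbf{x}_j$ is partitioned into $L_j\ge1$ disjoint subvectors, $\mathbf{x}_j=[\mathbf{x}_{j1}^T,\dots,\mathbf{x}_{jL_j}^T]^T$. For each $j,l$, $\gamma_{jl}$ is an $R_{jl}$-level vector quantizer ($R_{jl}\ge1$ an integer): there are disjoint quantization regions $I_{jl}^{(1)},\dots,I_{jl}^{(R_{jl})}$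 covering the domain of $\gamma_{jl}$, and $\gamma_{jl}(\mathbf{x}_{jl})=\sum_{r=1}^{R_{jl}} r\,\mathbb{1}\{\mathbf{x}_{jl}\in I_{jl}^{(r)}\}$. The superquantizer $\Gamma_j(\mathbf{x}_j)=[\gamma_{j1}(\mathbf{x}_{j1}),\dots,\gamma_{jL_j}(\mathbf{x}_{jL_j})]^T$ is a measurable map from $(\mathscr{X}_j,\mathscr{F}_j)$ to $\mathbb{R}^{L_j}$ with its Borel algebra. The fusion center receives $\mathbf{u}=[\mathbf{u}_1^T,\dots,\mathbf{u}_N^T]^T$ with $\mathbf{u}_j=\Gamma_j(\mathbf{x}_j)$. Let $\mathcal{S}_j$ be the set of all possible outcomes of $\Gamma_j$, so $|\mathcal{S}_j|=\prod_{l=1}^{L_j}R_{jl}$, and for $\mathbf{s}\in\mathcal{S}_j$ let $q_j^{(\mathbf{s})}(\theta)=\mathscr{P}_j^\theta(\Gamma_j(\mathbf{x}_j)=\mathbf{s})$. The Fisher information matrix for estimating $\theta$ from $\mathbf{u}$ is the $D_\theta\times D_\theta$ matrix $$\mathbf{J}(\theta)=\sum_{j=1}^N\sum_{\mathbf{s}\in\mathcal{S}_j}\frac{1}{q_j^{(\mathbf{s})}(\theta)}\frac{\partial q_j^{(\mathbf{s})}(\theta)}{\partial\theta}\left[\frac{\partial q_j^{(\mathbf{s})}(\theta)}{\partial\theta}\right]^T,$$ where summands with $q_j^{(\mathbf{s})}(\theta)=0$ are omitted. The quantity $\lambda(N,\{R_{jl}\})$ is called the inestimable dimension for quantized data (IDQD).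 *)

(* Defs.v *)
From HB Require Import structures.
From mathcomp Require Import all_boot all_order all_algebra.
From mathcomp Require Import all_classical all_reals all_analysis.
Set Implicit Arguments. Unset Strict Implicit. Unset Printing Implicit Defensive.
Import Order.TTheory GRing.Theory Num.Theory.
Import numFieldNormedType.Exports.
Local Open Scope classical_set_scope.
Local Open Scope ring_scope.

(* Set of all possible outcomes of a superquantizer with L subvectors,
   the l-th quantized with Rl l levels (levels indexed 0..Rl l - 1,
   i.e. the paper's level r corresponds to the ordinal r-1). *)
Definition outcome (L : nat) (Rl : 'I_L -> nat) : finType :=
  {dffun forall l : 'I_L, 'I_(Rl l)}.

(* Superquantizer Gamma(x) = [gamma_1(x_1); ...; gamma_L(x_L)], where
   x_l = sub l x is the l-th subvector and gamma_l is an (Rl l)-level quantizer,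
   its quantization regions being the level sets gamma_l^{-1}(r). *)
Definition superquantizer (T : Type) (L : nat) (Rl : 'I_L -> nat)
  (Y : 'I_L -> Type) (sub : forall l, T -> Y l)
  (gam : forall l, Y l -> 'I_(Rl l)) (x : T) : outcome Rl :=
  [ffun l : 'I_L => gam l (sub l x)].

Definition qprob (R : realType) (D : nat) (d : measure_display)
  (T : measurableType d) (P : 'rV[R]_D -> probability T R)
  (L : nat) (Rl : 'I_L -> nat) (Gam : T -> outcome Rl)
  (s : outcome Rl) (theta : 'rV[R]_D) : R :=
  fine (P theta (Gam @^-1` [set s])).

Definition grad (R : realType) (D : nat) (f : 'rV[R]_D -> R) (theta : 'rV[R]_D)
  : 'cV[R]_D :=
  \col_(i < D) derive f theta (delta_mx 0 i).

Definition fisher (R : realType) (D N : nat) (L : 'I_N -> nat)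
  (Rl : forall j, 'I_(L j) -> nat)
  (q : forall j, outcome (Rl j) -> 'rV[R]_D -> R) (theta : 'rV[R]_D)
  : 'M[R]_D :=
  \sum_(j < N) \sum_(s : outcome (Rl j) | q j s theta != 0)
     (q j s theta)^-1 *: (grad (q j s) theta *m (grad (q j s) theta)^T).

(* Main.v *)
Require Import Defs.
From HB Require Import structures.
From mathcomp Require Import all_boot all_order all_algebra.
From mathcomp Require Import all_classical all_reals all_analysis.
Import Order.TTheory GRing.Theory Num.Theory.
Import numFieldNormedType.Exports.
Local Open Scope classical_set_scope.
Local Open Scope ring_scope.


Lemma derive_min (R : realType) n (f : 'rV[R]_n -> R) x v :
  derivable f x v -> (forall y, f x <= f y) -> derive f x v = 0.
Proof.
move=> df fmin; apply/eqP; rewrite eq_le; apply/andP; split.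
  rewrite /derive (cvg_at_leftE (fun h : R => h^-1 *: ((f \o shift x) (h *: v) - f x))) //.
  apply: limr_le.
    apply/cvg_ex; eexists; apply: cvg_trans df; apply: cvg_app.
    move=> A [e egt0 Ae]; exists e => // y ye yneg; apply: Ae => //.
    exact/ltr0_neq0.
  near=> h; apply: mulr_le0_ge0.
    by rewrite invr_le0; apply: ltW; near: h; exists 1 => /=.
  by rewrite subr_ge0; apply: fmin.
rewrite /derive (cvg_at_rightE (fun h : R => h^-1 *: ((f \o shift x) (h *: v) - f x))) //.
apply: limr_ge.
  apply/cvg_ex; eexists; apply: cvg_trans df; apply: cvg_app.
  move=> A [e egt0 Ae]; exists e => // y ye yneg; apply: Ae => //.
  exact/lt0r_neq0.
near=> h; apply: mulr_ge0.
  by rewrite invr_ge0; apply: ltW; near: h; exists 1 => /=.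
by rewrite subr_ge0; apply: fmin.
Unshelve. all: by end_near. Qed.

Lemma rank_sums (F : fieldType) (I : Type) (r : seq I) (P : pred I) n
  (A : I -> 'M[F]_n) :
  (\rank (\sum_(i <- r | P i) A i)%MS <= \sum_(i <- r | P i) \rank (A i))%N.
Proof.
elim/big_rec2: _ => [|i k B Pi IH]; first by rewrite mxrank0.
apply: leq_trans (mxrank_adds_leqif _ _).1 _.
by rewrite leq_add2l.
Qed.

Lemma rank_sum (F : fieldType) (I : Type) (r : seq I) (P : pred I) m n
  (A : I -> 'M[F]_(m, n)) :
  (\rank (\sum_(i <- r | P i) A i)%R <= \sum_(i <- r | P i) \rank (A i))%N.
Proof.
elim/big_rec2: _ => [|i k B Pi IH]; first by rewrite mxrank0.
apply: leq_trans (mxrankS (addmx_sub_adds (submx_refl (A i)) (submx_refl k))) _.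
apply: leq_trans (mxrank_adds_leqif _ _).1 _.
by rewrite leq_add2l.
Qed.

Lemma det0 (F : fieldType) n (A : 'M[F]_n) : (\rank A < n)%N -> \det A = 0.
Proof.
move=> lt; apply/eqP; apply/negPn/negP => dA.
have : A \in unitmx by rewrite unitmxE unitfE.
by move/mxrank_unit => e; rewrite e ltnn in lt.
Qed.

Lemma rank_block (F : fieldType) (S : finType) (P : pred S) n (c : S -> F)
  (g : S -> 'cV[F]_n) :
  (exists s0, P s0) -> \sum_(s | P s) g s = 0 ->
  (\rank (\sum_(s | P s) c s *: (g s *m (g s)^T))%R <= #|S|.-1)%N.
Proof.
move=> [s0 Ps0] g0.
pose V := (\sum_(s | P s && (s != s0)) <<(g s)^T>>)%MS.
have gV : forall s, P s -> ((g s)^T <= V)%MS.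
  move=> s Ps; case: (eqVneq s s0) => [->|ns].
    have -> : (g s0)^T = - \sum_(s | P s && (s != s0)) (g s)^T.
      apply/eqP; rewrite -addr_eq0; apply/eqP.
      rewrite -linear_sum -raddfD /= -(bigD1 s0 Ps0) /= g0.
      by rewrite trmx0.
    rewrite (eqmx_opp _); apply: summx_sub => t /andP [Pt nt].
    by apply: (sumsmx_sup t); rewrite ?Pt ?nt // genmxE.
  by apply: (sumsmx_sup s); rewrite ?Ps ?ns // genmxE.
have JV : ((\sum_(s | P s) c s *: (g s *m (g s)^T))%R <= V)%MS.
  apply: summx_sub => s Ps; apply: scalemx_sub.
  exact: submx_trans (submxMl _ _) (gV s Ps).
apply: leq_trans (mxrankS JV) _.
rewrite /V; apply: leq_trans (rank_sums _ _ _ _ _ _) _.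
apply: (@leq_trans (\sum_(s | P s && (s != s0)) 1)).
  by apply: leq_sum => s _; rewrite mxrank_gen rank_leq_row.
rewrite sum1_card -(cardC1 s0) /=.
apply: subset_leq_card; apply/fintype.subsetP => s; rewrite !inE => /andP[].
by [].
Qed.

Lemma qsum_seq (R : realType) d (T : measurableType d) (Pr : probability T R)
  (S : finType) (G : T -> S) : (forall s, measurable (G @^-1` [set s])) ->
  forall r : seq S, uniq r ->
  measurable (G @^-1` [set x | x \in r]) /\
  \sum_(s <- r) fine (Pr (G @^-1` [set s])) = fine (Pr (G @^-1` [set x | x \in r])).
Proof.
move=> mG; elim=> [|a r IH] /=.
  move=> _; rewrite big_nil.
  have -> : G @^-1` [set x | x \in [::]] = set0 by apply/seteqP; split => x.
  by rewrite measure0.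
move=> /andP [ar ur]; have [mr er] := IH ur.
have -> : G @^-1` [set x | x \in a :: r] = G @^-1` [set a] `|` G @^-1` [set x | x \in r].
  apply/seteqP; split => x /=; rewrite in_cons.
    by case/orP => [/eqP ->|xr]; [left|right].
  by case => [->|->]; rewrite ?eqxx ?orbT.
split; first exact: measurableU.
rewrite big_cons er measureU //; last first.
  apply/seteqP; split => x //= [xa xr]; move: ar; by rewrite -xa xr.
rewrite fineD //; exact: fin_num_measure.
Qed.

Lemma qsum (R : realType) d (T : measurableType d) (Pr : probability T R)
  (S : finType) (G : T -> S) : (forall s, measurable (G @^-1` [set s])) ->
  \sum_(s : S) fine (Pr (G @^-1` [set s])) = 1.
Proof.
move=> mG; have [_ e] := @qsum_seq _ _ _ Pr _ _ mG _ (index_enum_uniq S).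
have eT : G @^-1` [set x | x \in index_enum S] = setT.
  by apply/seteqP; split => x //= _; rewrite mem_index_enum.
by rewrite eT probability_setT in e; exact: e.
Qed.

Lemma derive_sumseq (R : realType) n (I : Type) (r : seq I)
  (h : I -> 'rV[R]_n -> R) x v : (forall i, derivable (h i) x v) ->
  derivable (fun t => \sum_(i <- r) h i t) x v /\
  derive (fun t => \sum_(i <- r) h i t) x v = \sum_(i <- r) derive (h i) x v.
Proof.
move=> dh; elim: r => [|a r [IHd IHe]].
  have -> : (fun t : 'rV[R]_n => \sum_(i <- [::]) h i t) = cst 0.
    by apply/funext => t; rewrite big_nil.
  by rewrite big_nil derive_cst; split => //; exact: derivable_cst.
have -> : (fun t => \sum_(i <- a :: r) h i t) = h a + (fun t => \sum_(i <- r) h i t).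
  by apply/funext => t; rewrite big_cons.
split; first exact: derivableD.
by rewrite deriveD // IHe big_cons.
Qed.

Lemma card_out (L : nat) (Rl : 'I_L -> nat) :
  #|outcome Rl| = (\prod_(l < L) Rl l)%N.
Proof.
rewrite /outcome card_dep_ffun foldrE big_image /=.
apply: eq_bigr => i _; exact: card_ord.
Qed.
Theorem theorem1 (R : realType) (D : nat) (Theta : set 'rV[R]_D)
  (N : nat) (L : 'I_N -> nat) (Rl : forall j, 'I_(L j) -> nat)
  (dX : 'I_N -> measure_display) (X : forall j, measurableType (dX j))
  (P : forall j, 'rV[R]_D -> probability (X j) R)
  (Y : forall j, 'I_(L j) -> Type)
  (sub : forall j (l : 'I_(L j)), X j -> Y j l)
  (gam : forall j (l : 'I_(L j)), Y j l -> 'I_(Rl j l)) :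
  (0 < N)%N ->
  (forall j, 0 < L j)%N ->
  (forall j l, 0 < Rl j l)%N ->
  (* the superquantizer Gamma_j is measurable *)
  (forall j (s : outcome (Rl j)),
     measurable (superquantizer (sub j) (gam j) @^-1` [set s])) ->
  (* (i) the interior of Theta is nonempty *)
  interior Theta !=set0 ->
  (* (ii) theta |-> q_j^(s)(theta) is twice differentiable on Theta *)
  (forall j (s : outcome (Rl j)) theta, Theta theta ->
     differentiable (qprob (P j) (superquantizer (sub j) (gam j)) s) theta /\
     forall i : 'I_D,
       differentiable (fun t => derive
         (qprob (P j) (superquantizer (sub j) (gam j)) s) t (delta_mx 0 i))
         theta) ->
  forall theta, Theta theta ->
  (\sum_(j < N) \prod_(l < L j) Rl j l - N < D)%N ->
  \det (fisher (fun j => qprob (P j) (superquantizer (sub j) (gam j))) theta)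
    = 0.
Proof.
move=> N0 L0 R0 mG _ hdiff theta Ttheta hD.
apply: det0; rewrite /fisher /=.
apply: leq_ltn_trans (rank_sum _ _ _ _ _ _ _) _.
apply: (@leq_ltn_trans (\sum_(j < N) (#|outcome (Rl j)|.-1))).
  apply: leq_sum => j _; apply: rank_block.
  - apply: contrapT => hne.
    have := @qsum _ _ _ (P j theta) _ _ (mG j).
    rewrite big1 => [/esym/eqP|s _]; first by rewrite oner_eq0.
    by apply/eqP; apply/negPn/negP => hs; apply: hne; exists s.
  - apply/matrixP => i k; rewrite summxE mxE.
    under eq_bigr do rewrite /grad mxE.
    set q := qprob (P j) (superquantizer (sub j) (gam j)).
    have dq : forall s, derivable (q s) theta (delta_mx 0 i).
      by move=> s; apply: diff_derivable; exact: (hdiff j s theta Ttheta).1.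
    transitivity (\sum_s derive (q s) theta (delta_mx 0 i)).
      rewrite [RHS](bigID (fun s => q s theta != 0)) /=.
      rewrite [X in _ = _ + X]big1 ?addr0 // => s /negPn/eqP q0.
      apply: derive_min => // y; rewrite q0 /q /qprob.
      by apply: fine_ge0; exact: measure_ge0.
    have [_ <-] := @derive_sumseq _ _ _ (index_enum (outcome (Rl j))) q theta
      (delta_mx 0 i) dq.
    have -> : (fun t => \sum_(s <- index_enum (outcome (Rl j))) q s t) = cst 1.
      by apply/funext => t; rewrite /q /qprob qsum.
    by rewrite derive_cst.
have hs : (\sum_(j < N) #|outcome (Rl j)|.-1 + N =
           \sum_(j < N) \prod_(l < L j) Rl j l)%N.
  have e1 : (\sum_(j < N) 1)%N = N by rewrite big_const_ord iter_addn_0 mul1n.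
  rewrite -[X in (_ + X = _)%N]e1.
  rewrite -big_split /=; apply: eq_bigr => j _.
  rewrite addn1 prednK card_out //.
  by apply/prodn_gt0 => l; exact: R0.
by rewrite -hs addnK in hD.
Qed.
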